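(* Let $q$ be a prime power, $N$ a subgroup of $S_3$, and $\mathcal{L}\subseteq\mathbb{F}_q^3$ a subset invariant under the action of $N$, i.e. $\mathcal{L}^N=\mathcal{L}$. Suppose that each orbit of the action of $N\times K$ on $\mathcal{A}_q$ contains an element $u$ which can be written as $u=\lambda h+\mu e_j$ for some $h\in\mathcal{L}$, $\lambda,\mu\in\mathbb{F}_q$ and $j\in\{1,2,3\}$. Then $\mathcal{L}\cup\{(1,1,1)\}$ is a short covering of $\mathbb{F}_q^3$.
   Context: $\mathbb{F}_q$ is the finite field with $q$ elements; $e_1,e_2,e_3$ are the standard basis vectors of $\mathbb{F}_q^3$. Hamming distance $d(u,v)=|\{i:u_i\ne v_i\}|$; $B(u)=\{v:d(u,v)\le1\}$; $E(u)=\bigcup_{\lambda\in\mathbb{F}_q}B(\lambda u)$. A set $\mathcal{H}\subseteq\mathbb{F}_q^3$ is a short covering of $\mathbb{F}_q^3$ if $\bigcup_{h\in\mathcal{H}}E(h)=\mathbb{F}_q^3$. $S_3$ acts on $\mathbb{F}_q^3$ by permuting coordinates; $K=\{(u_1,u_2,u_3)\mapsto(\lambda u_1,\lambda u_2,\lambda u_3):\lambda\in\mathbb{F}_q^*\}$; these actions commute, giving an action of $N\times K$ on $\mathbb{F}_q^3$. $\mathcal{A}_q=\{(u_1,u_2,u_3)\in\mathbb{F}_q^3: u_1,u_2,u_3 \text{ pairwise distinct}\}$, which is invariant under $S_3\times K$. *)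

(* Defs.v *)
From HB Require Import structures.
From mathcomp Require Import all_boot all_order all_fingroup all_algebra.
Set Implicit Arguments. Unset Strict Implicit. Unset Printing Implicit Defensive.
Import GRing.Theory.
Local Open Scope ring_scope.

Section Defs.
Variable F : finFieldType.

Definition hdist (u v : 'rV[F]_3) : nat := #|[set i : 'I_3 | u 0 i != v 0 i]|.

Definition ball1 (u : 'rV[F]_3) : {set 'rV[F]_3} := [set v | (hdist u v <= 1)%N].

Definition Eset (u : 'rV[F]_3) : {set 'rV[F]_3} :=
  \bigcup_(lam : F) ball1 (lam *: u).

Definition short_covering (H : {set 'rV[F]_3}) : Prop :=
  \bigcup_(h in H) Eset h = [set: 'rV[F]_3].

Definition evec (j : 'I_3) : 'rV[F]_3 := delta_mx 0 j.

Definition permv (s : {perm 'I_3}) (u : 'rV[F]_3) : 'rV[F]_3 :=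
  \row_i u 0 ((s^-1)%g i).

Definition Aq : {set 'rV[F]_3} :=
  [set u : 'rV[F]_3 | [&& u 0 0 != u 0 1, u 0 0 != u 0 2 & u 0 1 != u 0 2]].

Definition ones : 'rV[F]_3 := const_mx 1.

Definition orbitNK (N : {group {perm 'I_3}}) (u : 'rV[F]_3) : {set 'rV[F]_3} :=
  [set lam *: permv s u | s in N, lam in [set x : F | x != 0]].

End Defs.

(* Main.v *)
Require Import Defs.
From HB Require Import structures.
From mathcomp Require Import all_boot all_order all_fingroup all_algebra.
Import GRing.Theory.
Local Open Scope ring_scope.

Lemma hdist_le1 (F : finFieldType) (x y : 'rV[F]_3) (k : 'I_3) :
  (forall i, i != k -> x 0 i = y 0 i) -> (hdist x y <= 1)%N.
Proof.
move=> H; rewrite /hdist; apply: (leq_trans _ (eq_leq (cards1 k))); apply: subset_leq_card.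
apply/subsetP=> i; rewrite !inE; apply: contraR => /H ->; by rewrite eqxx.
Qed.

Lemma inE_cov (F : finFieldType) (H : {set 'rV[F]_3}) (h : 'rV[F]_3) (c : F) (w : 'rV[F]_3) (k : 'I_3) :
  h \in H -> (forall i, i != k -> (c *: h) 0 i = w 0 i) ->
  w \in \bigcup_(h in H) Eset h.
Proof.
move=> hH Hk; apply/bigcupP; exists h => //; apply/bigcupP; exists c => //.
by rewrite inE; apply: hdist_le1 Hk.
Qed.

Theorem theorem22 (F : finFieldType) (N : {group {perm 'I_3}})
    (L : {set 'rV[F]_3}) :
  (forall s, s \in N -> [set permv s h | h in L] = L) ->
  (forall u, u \in Aq F ->
     exists2 v, v \in orbitNK N u &
       exists h, exists lam : F, exists mu : F, exists j : 'I_3,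
         h \in L /\ v = lam *: h + mu *: evec F j) ->
  short_covering (ones F |: L).
Proof.
move=> Hinv Hcov; apply/setP => w; rewrite inE.
have onesE : forall a (i : 'I_3), (a *: ones F) 0 i = w 0 i <->  a = w 0 i.
  by move=> a i; rewrite mxE /ones mxE mulr1.
case: (boolP (w \in Aq F)) => wA; last first.
  move: wA; rewrite inE !negb_and !negbK => /orP[e01|/orP[e02|e12]].
  - apply: (@inE_cov F _ (ones F) (w 0 0) w (2%:R : 'I_3)); first by rewrite setU11.
    move=> i; case: i => [[|[|[|]]] //= Hi] _; apply/onesE => //=.
    + by congr (w 0 _); apply: val_inj.
    + by rewrite (eqP e01); congr (w 0 _); apply: val_inj.
  - apply: (@inE_cov F _ (ones F) (w 0 0) w (1%:R : 'I_3)); first by rewrite setU11.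
    move=> i; case: i => [[|[|[|]]] //= Hi] _; apply/onesE => //=.
    + by congr (w 0 _); apply: val_inj.
    + by rewrite (eqP e02); congr (w 0 _); apply: val_inj.
  - apply: (@inE_cov F _ (ones F) (w 0 1) w (0%:R : 'I_3)); first by rewrite setU11.
    move=> i; case: i => [[|[|[|]]] //= Hi] _; apply/onesE => //=.
    + by congr (w 0 _); apply: val_inj.
    + by rewrite (eqP e12); congr (w 0 _); apply: val_inj.
have [v vO [h [la [mu [j [hL ev]]]]]] := Hcov w wA.
case/imset2P: vO => s lam sN; rewrite inE => lam0 vE.
have siN : (s^-1)%g \in N by rewrite groupV.
have h'L : permv (s^-1)%g h \in L by rewrite -(Hinv _ siN); apply: imset_f.
apply: (@inE_cov F _ (permv (s^-1)%g h) (lam^-1 * la) w ((s^-1)%g j)).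
  by rewrite setU1r.
move=> i Hi.
have Hsi : s i != j by apply: contraNneq Hi => <-; rewrite permK.
have := congr1 (fun m : 'rV[F]_3 => m 0 (s i)) vE.
rewrite ev /=.
rewrite /permv /evec !mxE invgK permK (negbTE Hsi) andbF mulr0 addr0.
move=> E; by rewrite -mulrA E mulrA mulVf // mul1r.
Qed.
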